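(* Let $\mathcal{P}=(\{\mathcal{E}_k:k\in K\},\{M_0,M_1\})$ be a concurrent quantum program on a Hilbert space $\mathcal{H}$ of finite dimension $d$, with initial density operator $\rho_0$. Then $\mathcal{P}$ with input $\rho_0$ terminates in the fair schedule $F$ if and only if it terminates in the schedule $\Pi^\omega$.
   Context: $\mathcal{H}$ is a complex Hilbert space of finite dimension $d\ge1$. A super-operator is a completely positive trace-non-increasing linear map on operators on $\mathcal{H}$. A concurrent quantum program is $\mathcal{P}=(\{\mathcal{E}_k:k\in K\},\{M_0,M_1\})$ with $K=\{1,\dots,m\}$, each $\mathcal{E}_k$ a trace-preserving super-operator, and $M_0^\dagger M_0+M_1^\dagger M_1=I$. $\mathcal{F}_k(\rho)=\mathcal{E}_k(M_1\rho M_1^\dagger)$; for a finite string $f=s_1\cdots s_n$ over $K$, $\mathcal{F}_f=\mathcal{F}_{s_n}\circ\cdots\circ\mathcal{F}_{s_1}$. $S=K^\omega$; for $s\in S$, $s[n]$ is its prefix of length $n$. $\mathcal{P}$ with input $\rho_0$ terminates for $s$ if $\mathcal{F}_{s[n]}(\rho_0)=0$ for some $n\ge1$, and terminates in a schedule $A\subseteq S$ if it terminates for every $s\in A$. An infinite path $s$ is fair if every $k\in K$ occurs infinitely often in $s$; $F$ is the set of fair paths. $P_K$ is the set of permutations of $K$, viewed as strings $s_1s_2\cdots s_m$ in which each element of $K$ occurs exactly once. $\Pi=\{s_1\sigma_1s_2\sigma_2\cdots\sigma_{m-1}s_m:\ s_1\cdots s_m\in P_K,\ \sigma_i\in K^*,\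 |\sigma_i|<d\text{ for }1\le i<m\}$, and $\Pi^\omega$ is the set of infinite paths that are concatenations of infinitely many strings from $\Pi$. *)

(* Defs.v *)
From HB Require Import structures.
From mathcomp Require Import all_boot all_order all_algebra.
Set Implicit Arguments. Unset Strict Implicit. Unset Printing Implicit Defensive.
Import Order.TTheory GRing.Theory Num.Theory.
Local Open Scope ring_scope.

Section QProg.
Variable C : numClosedFieldType.

Definition adjmx (n : nat) (A : 'M[C]_n) : 'M[C]_n := (map_mx Num.conj A)^T.

Definition psd_f (T : finType) (A : T -> T -> C) : Prop :=
  forall v : T -> C,
    0 <= \sum_(i : T) \sum_(j : T) Num.conj (v i) * A i j * v j.

Definition psdmx (n : nat) (A : 'M[C]_n) : Prop := psd_f (fun i j => A i j).

Definition density (d : nat) (rho : 'M[C]_d) : Prop := psdmx rho /\ \tr rho = 1.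

(* complete positivity: id_n (x) E maps positive operators on C^n (x) H
   (written as n x n block matrices of d x d blocks) to positive operators *)
Definition completely_positive (d : nat) (E : 'M[C]_d -> 'M[C]_d) : Prop :=
  forall (n : nat) (X : 'I_n -> 'I_n -> 'M[C]_d),
    psd_f (fun a b : 'I_n * 'I_d => X a.1 b.1 a.2 b.2) ->
    psd_f (fun a b : 'I_n * 'I_d => E (X a.1 b.1) a.2 b.2).

Definition trace_nonincreasing (d : nat) (E : 'M[C]_d -> 'M[C]_d) : Prop :=
  forall rho : 'M[C]_d, psdmx rho -> \tr (E rho) <= \tr rho.

Definition trace_preserving (d : nat) (E : 'M[C]_d -> 'M[C]_d) : Prop :=
  forall A : 'M[C]_d, \tr (E A) = \tr A.

Definition superop (d : nat) (E : {linear 'M[C]_d -> 'M[C]_d}) : Prop :=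
  completely_positive E /\ trace_nonincreasing E.

Definition Fk (d m : nat) (E : 'I_m -> 'M[C]_d -> 'M[C]_d) (M1 : 'M[C]_d)
  (k : 'I_m) (rho : 'M[C]_d) : 'M[C]_d := E k (M1 *m rho *m adjmx M1).

Definition Fstr (d m : nat) (E : 'I_m -> 'M[C]_d -> 'M[C]_d) (M1 : 'M[C]_d)
  (f : seq 'I_m) (rho : 'M[C]_d) : 'M[C]_d :=
  foldl (fun r k => Fk E M1 k r) rho f.

Definition prefix (m : nat) (s : nat -> 'I_m) (n : nat) : seq 'I_m :=
  [seq s i | i <- iota 0 n].

Definition terminates_for (d m : nat) (E : 'I_m -> 'M[C]_d -> 'M[C]_d)
  (M1 rho0 : 'M[C]_d) (s : nat -> 'I_m) : Prop :=
  exists n : nat, (1 <= n)%N /\ Fstr E M1 (prefix s n) rho0 = 0.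

Definition terminates_in (d m : nat) (E : 'I_m -> 'M[C]_d -> 'M[C]_d)
  (M1 rho0 : 'M[C]_d) (A : (nat -> 'I_m) -> Prop) : Prop :=
  forall s, A s -> terminates_for E M1 rho0 s.

End QProg.

Definition fair (m : nat) (s : nat -> 'I_m) : Prop :=
  forall (k : 'I_m) (N : nat), exists n : nat, (N <= n)%N /\ s n = k.

(* s_1 sigma_1 s_2 sigma_2 ... sigma_{m-1} s_m *)
Fixpoint interleave (T : Type) (p : seq T) (sig : seq (seq T)) : seq T :=
  match p, sig with
  | [::], _ => [::]
  | x :: xs, [::] => x :: xs
  | x :: xs, σ :: σs =>
      match xs with
      | [::] => [:: x]
      | _ => x :: σ ++ interleave xs σs
      end
  end.

Definition inPi (d m : nat) (w : seq 'I_m) : Prop :=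
  exists (p : seq 'I_m) (sig : seq (seq 'I_m)),
    [/\ perm_eq p (enum 'I_m), size sig = m.-1,
        all (fun σ => size σ < d)%N sig & w = interleave p sig].

(* Pi^omega: s is the concatenation of infinitely many strings of Pi,
   the i-th one occupying positions c i, ..., c (i+1) - 1 *)
Definition inPiomega (d m : nat) (s : nat -> 'I_m) : Prop :=
  exists c : nat -> nat,
    c 0 = 0%N /\
    forall i : nat, (c i < c i.+1)%N /\
      inPi d [seq s j | j <- iota (c i) (c i.+1 - c i)].

(* Main.v *)
Require Import Defs.
From HB Require Import structures.
From mathcomp Require Import all_boot all_order all_algebra.
From mathcomp Require Import sesquilinear spectral ring.
From Stdlib Require Import Classical IndefiniteDescription.
From mathcomp Require Import zify.
Set Implicit Arguments. Unset Strict Implicit. Unset Printing Implicit Defensive.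
Import Order.TTheory GRing.Theory Num.Theory.
Local Open Scope ring_scope.
Local Open Scope sesquilinear_scope.
Local Notation prefix := Defs.prefix.

Section LA.
Variable C : numClosedFieldType.
Variable d : nat.
Implicit Types A B : 'M[C]_d.

Definition bf A (x y : 'cV[C]_d) : C := (x ^t* *m A *m y) 0 0.
Definition qf A (x : 'cV[C]_d) : C := bf A x x.

Lemma bfE A x y : bf A x y = \sum_i \sum_j Num.conj (x i 0) * A i j * y j 0.
Proof.
rewrite /bf mxE exchange_big /=; apply: eq_bigr => i _.
rewrite mxE mulr_suml; apply: eq_bigr => j _.
by rewrite !mxE.
Qed.

Lemma psdP A : psdmx A <-> forall x : 'cV_d, 0 <= qf A x.
Proof.
split=> [h x|h v].
  by rewrite /qf bfE; apply: (h (fun i => x i 0)).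
by have := h (\col_i v i); rewrite /qf bfE; under eq_bigr do under eq_bigr do rewrite !mxE.
Qed.

Lemma adjD (x y : 'cV[C]_d) : (x + y)^t* = x^t* + y^t*.
Proof. by rewrite linearD /= map_mxD. Qed.
Lemma adjZ (a : C) (x : 'cV[C]_d) : (a *: x)^t* = Num.conj a *: x^t*.
Proof. by apply/matrixP => i j; rewrite !mxE rmorphM. Qed.

Lemma bfDl A x y z : bf A (x + y) z = bf A x z + bf A y z.
Proof. by rewrite /bf adjD !mulmxDl mxE. Qed.
Lemma bfDr A x y z : bf A z (x + y) = bf A z x + bf A z y.
Proof. by rewrite /bf !mulmxDr mxE. Qed.
Lemma bfZl A a x y : bf A (a *: x) y = Num.conj a * bf A x y.
Proof. by rewrite /bf adjZ -!scalemxAl mxE. Qed.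
Lemma bfZr A a x y : bf A x (a *: y) = a * bf A x y.
Proof. by rewrite /bf -!scalemxAr mxE. Qed.

Definition ev (i : 'I_d) : 'cV[C]_d := delta_mx i 0.
Lemma bf_ev A i j : bf A (ev i) (ev j) = A i j.
Proof.
rewrite bfE (bigD1 i) //= [X in _ + X]big1; last first.
  by move=> k ki; apply: big1 => l _; rewrite !mxE (negbTE ki) /= rmorph0 !mul0r.
rewrite addr0.
rewrite (bigD1 j) //= [X in _ + X]big1; last first.
  by move=> l lj; rewrite !mxE (negbTE lj) mulr0.
by rewrite !mxE !eqxx /= rmorph1 mul1r mulr1 !addr0.
Qed.

Lemma ge0_conj (z : C) : 0 <= z -> Num.conj z = z.
Proof. by move=> h; apply: conj_Creal; apply: ger0_real. Qed.

Lemma psd_herm A : psdmx A -> forall i j, A j i = Num.conj (A i j).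
Proof.
move/psdP=> h i j.
have h1 := ge0_conj (h (ev i + ev j)).
have h2 := ge0_conj (h (ev i + 'i *: ev j)).
have hi := ge0_conj (h (ev i)); have hj := ge0_conj (h (ev j)).
move: h1 h2 hi hj; rewrite /qf !bfDl !bfDr !bfZl !bfZr !bf_ev conjCi.
set a := A i j; set b := A j i; set p := A i i; set q := A j j.
rewrite !rmorphD !rmorphM /= !rmorphN /= ?conjCi => h1 h2 hi hj.
rewrite hi hj in h1 h2.
have e2 : 'i * (b^* - a^*) = 'i * (a - b).
  apply/eqP; rewrite -subr_eq0; apply/eqP.
  have : (p + - 'i * a^* + (- - 'i * b^* + - - 'i * (- 'i * q))) -
    (p + 'i * a + (- 'i * b + - 'i * ('i * q))) = 0 by rewrite h2 subrr.
  by move=> <-; ring.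
move/(mulfI (neq0Ci C)): e2 => e2.
have h1' : a^* + b^* = a + b.
  have := congr1 (fun z => z - p - q) h1 => /=.
  have -> : p + a^* + (b^* + q) - p - q = a^* + b^* by ring.
  by have -> : p + a + (b + q) - p - q = a + b by ring.
have : 2%:R * b = 2%:R * a^*.
  have -> : 2%:R * b = (a + b) - (a - b) by ring.
  have -> : 2%:R * a^* = (a^* + b^*) - (b^* - a^*) by ring.
  by rewrite e2 h1'.
have n2 : (2%:R : C) != 0 by rewrite pnatr_eq0.
by move/(mulfI n2).
Qed.

Lemma psd_hermsym A : psdmx A -> A \is hermsymmx.
Proof.
move=> h; apply/is_hermitianmxP; rewrite expr0 scale1r.
by apply/matrixP => i j; rewrite !mxE (psd_herm h).
Qed.

Lemma adjM m n p (X : 'M[C]_(m, n)) (Y : 'M[C]_(n, p)) : (X *m Y)^t* = Y^t* *m X^t*.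
Proof. by rewrite trmx_mul map_mxM. Qed.

Lemma bf_cong (M : 'M[C]_d) A x y : bf (M^t* *m A *m M) x y = bf A (M *m x) (M *m y).
Proof. by rewrite /bf adjM !mulmxA. Qed.

Definition Us A := spectralmx A.
Definition Ds A := spectral_diag A.

Lemma Us_unit A : Us A *m (Us A)^t* = 1%:M.
Proof. exact/unitarymxP/spectral_unitarymx. Qed.
Lemma Us_unit' A : (Us A)^t* *m Us A = 1%:M.
Proof. exact: mulmx1C (Us_unit A). Qed.

Lemma psd_spec A : psdmx A -> A = (Us A)^t* *m diag_mx (Ds A) *m Us A.
Proof.
move=> h; have /hermitian_normalmx/orthomx_spectralP e := psd_hermsym h.
by rewrite -invmx_unitary ?spectral_unitarymx.
Qed.

Lemma qf_diag (D : 'rV[C]_d) y :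
  qf (diag_mx D) y = \sum_k D 0 k * (Num.conj (y k 0) * y k 0).
Proof.
rewrite /qf bfE; apply: eq_bigr => i _.
rewrite (bigD1 i) //= big1 => [|j ji]; last by rewrite !mxE eq_sym (negbTE ji) mulr0n mulr0 mul0r.
by rewrite !mxE eqxx mulr1n addr0 mulrCA mulrA.
Qed.

Lemma qf_spec A x : psdmx A -> qf A x = qf (diag_mx (Ds A)) (Us A *m x).
Proof. by move=> h; rewrite {1}(psd_spec h) /qf bf_cong. Qed.

Lemma Ds_ge0 A k : psdmx A -> 0 <= Ds A 0 k.
Proof.
move=> h; have /psdP/(_ ((Us A)^t* *m ev k)) := h.
by rewrite qf_spec // mulmxA Us_unit mul1mx /qf bf_ev mxE eqxx mulr1n.
Qed.

Lemma diag_kill (D : 'rV[C]_d) (y : 'cV[C]_d) :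
  (forall k, D 0 k * (Num.conj (y k 0) * y k 0) = 0) -> diag_mx D *m y = 0.
Proof.
move=> hall; apply/matrixP => k l; rewrite !mxE (bigD1 k) //= big1 => [|j jk]; last first.
  by rewrite !mxE eq_sym (negbTE jk) mulr0n mul0r.
rewrite !mxE eqxx mulr1n addr0 ord1.
have /eqP := hall k; rewrite mulf_eq0 => /orP[/eqP->|]; first by rewrite mul0r.
by rewrite mulf_eq0 conjC_eq0 orbb => /eqP->; rewrite mulr0.
Qed.

Lemma psd0 A x : psdmx A -> qf A x = 0 -> A *m x = 0.
Proof.
move=> h; rewrite qf_spec // qf_diag => /eqP; rewrite psumr_eq0 => [/allP hall|k _]; last first.
  by apply: mulr_ge0; [exact: Ds_ge0| rewrite -normCKC exprn_ge0].
have e : diag_mx (Ds A) *m (Us A *m x) = 0.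
  by apply: diag_kill => k; apply/eqP; have := hall k (mem_index_enum _).
by rewrite (psd_spec h) -!mulmxA e !mulmx0.
Qed.

Lemma amgm (a b : C) : 0 <= a -> 0 <= b -> a * b <= a ^+ 2 + b ^+ 2.
Proof.
move=> ha hb; rewrite -subr_ge0.
have -> : a ^+ 2 + b ^+ 2 - a * b = (a - b) ^+ 2 + a * b by ring.
apply: addr_ge0; last exact: mulr_ge0.
by rewrite -realEsqr realB // ger0_real.
Qed.

Lemma mul_ev A i k : (A *m ev k) i 0 = A i k.
Proof.
rewrite !mxE (bigD1 k) //= big1 => [|j jk]; last by rewrite !mxE (negbTE jk) mulr0.
by rewrite !mxE !eqxx mulr1 addr0.
Qed.

Lemma bfDA A B x y : bf (A + B) x y = bf A x y + bf B x y.
Proof. by rewrite /bf mulmxDr mulmxDl mxE. Qed.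
Lemma bfZA c A x y : bf (c *: A) x y = c * bf A x y.
Proof. by rewrite /bf -scalemxAr -scalemxAl mxE. Qed.
Lemma bfNA A x y : bf (- A) x y = - bf A x y.
Proof. by rewrite -scaleN1r bfZA mulN1r. Qed.
Lemma bf0A x y : bf 0 x y = 0.
Proof. by rewrite /bf mulmx0 mul0mx mxE. Qed.

Lemma Dom_diag (D : 'rV[C]_d) A : (forall k, 0 <= D 0 k) -> psdmx A ->
  (forall x : 'cV_d, diag_mx D *m x = 0 -> A *m x = 0) ->
  exists c, 0 <= c /\ psdmx (c *: diag_mx D - A).
Proof.
move=> hD hA hk.
have zc : forall i k, D 0 k = 0 -> A i k = 0.
  move=> i k Dk; rewrite -mul_ev hk ?mxE //.
  apply: diag_kill => j; case: (eqVneq j k) => [->|jk]; first by rewrite Dk mul0r.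
  by rewrite !mxE (negbTE jk) /= !mulr0.
have zr : forall i k, D 0 k = 0 -> A k i = 0.
  by move=> i k Dk; rewrite (psd_herm hA) (zc _ _ Dk) rmorph0.
have Dinv : forall k, 0 <= (D 0 k)^-1 by move=> k; rewrite invr_ge0.
exists (\sum_i \sum_j `|A i j| * ((D 0 i)^-1 + (D 0 j)^-1)); split.
  by apply: sumr_ge0 => i _; apply: sumr_ge0 => j _; apply: mulr_ge0 => //; apply: addr_ge0.
apply/psdP => x; rewrite /qf bfDA bfNA bfZA subr_ge0.
set Q := bf (diag_mx D) x x.
have Q0 : 0 <= Q.
  change (0 <= qf (diag_mx D) x); rewrite qf_diag; apply: sumr_ge0 => k _; apply: mulr_ge0 => //; by rewrite -normCKC exprn_ge0.
have hQ : forall k, D 0 k != 0 -> `|x k 0| ^+ 2 <= (D 0 k)^-1 * Q.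
  move=> k Dk; rewrite -{1}(mulKf Dk (`|x k 0| ^+ 2)) ler_wpM2l //.
  change (D 0 k * `|x k 0| ^+ 2 <= qf (diag_mx D) x); rewrite qf_diag (bigD1 k) //= normCKC lerDl.
  by apply: sumr_ge0 => l _; apply: mulr_ge0 => //; by rewrite -normCKC exprn_ge0.
have hA0 : 0 <= bf A x x by have /psdP := hA; apply.
rewrite -(ger0_norm hA0) bfE mulr_suml.
apply: (le_trans (ler_norm_sum _ _ _)); apply: ler_sum => i _.
rewrite mulr_suml.
apply: (le_trans (ler_norm_sum _ _ _)); apply: ler_sum => j _.
have [Aij|Aij] := eqVneq (A i j) 0.
  by rewrite Aij mulr0 mul0r normr0 mulr_ge0 // mulr_ge0 // addr_ge0.
rewrite !normrM norm_conjC (mulrC `|x i 0|) -mulrA -mulrA ler_wpM2l //.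
have Di : D 0 i != 0 by apply: contra Aij => /eqP/(zr j i)->.
have Dj : D 0 j != 0 by apply: contra Aij => /eqP/(zc i j)->.
apply: (le_trans (amgm _ _)) => //; rewrite mulrDl; apply: lerD; exact: hQ.
Qed.

Lemma psd_cong (M : 'M[C]_d) A : psdmx A -> psdmx (M *m A *m M^t*).
Proof.
move=> /psdP h; apply/psdP => x.
by rewrite /qf -{1}(trmxCK M) bf_cong; apply: h.
Qed.

Lemma Dom A B : psdmx A -> psdmx B ->
  (forall x : 'cV_d, B *m x = 0 -> A *m x = 0) ->
  exists c, 0 <= c /\ psdmx (c *: B - A).
Proof.
move=> hA hB hk.
set U := Us B; set D := Ds B.
have eB : B = U^t* *m diag_mx D *m U := psd_spec hB.
have [c [c0 hc]] : exists c, 0 <= c /\ psdmx (c *: diag_mx D - U *m A *m U^t*).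
  apply: Dom_diag; [by move=> k; apply: Ds_ge0 | exact: psd_cong |].
  move=> x hx; rewrite -!mulmxA hk ?mulmx0 //.
  by rewrite eB -!mulmxA (mulmxA U) Us_unit mul1mx hx mulmx0.
exists c; split => //.
have := psd_cong (U^t*) hc; rewrite trmxCK mulmxBr mulmxBl -scalemxAr -scalemxAl -eB.
by rewrite !mulmxA Us_unit' mul1mx -mulmxA Us_unit' mulmx1.
Qed.

Definition lep A B := exists c, 0 <= c /\ psdmx (c *: B - A).

Lemma psd_0 : psdmx (0 : 'M[C]_d).
Proof. by apply/psdP => x; rewrite /qf bf0A. Qed.
Lemma psd_add A B : psdmx A -> psdmx B -> psdmx (A + B).
Proof. by move=> /psdP hA /psdP hB; apply/psdP => x; rewrite /qf bfDA addr_ge0 //; [apply: hA|apply: hB]. Qed.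
Lemma psd_scale c A : 0 <= c -> psdmx A -> psdmx (c *: A).
Proof. by move=> c0 /psdP hA; apply/psdP => x; rewrite /qf bfZA mulr_ge0 //; apply: hA. Qed.
Lemma psd_sum (I : Type) (r : seq I) (P : pred I) (G : I -> 'M[C]_d) :
  (forall i, psdmx (G i)) -> psdmx (\sum_(i <- r | P i) G i).
Proof.
move=> h; elim: r => [|i r IH]; first by rewrite big_nil; exact: psd_0.
by rewrite big_cons; case: (P i) => //; apply: psd_add.
Qed.

Lemma lep_refl A : lep A A.
Proof. by exists 1; split; [exact: ler01 | rewrite scale1r subrr; exact: psd_0]. Qed.
Lemma lep_trans A B D : lep A B -> lep B D -> lep A D.
Proof.
move=> [c1 [c10 h1]] [c2 [c20 h2]]; exists (c1 * c2); split; first exact: mulr_ge0.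
have -> : (c1 * c2) *: D - A = c1 *: (c2 *: D - B) + (c1 *: B - A).
  by rewrite scalerBr scalerA addrA subrK.
by apply: psd_add => //; apply: psd_scale.
Qed.
Lemma lep_addr A B : psdmx B -> lep A (A + B).
Proof. by move=> hB; exists 1; split; [exact: ler01 | rewrite scale1r addrC addKr]. Qed.
Lemma lep_add A B D : lep A D -> lep B D -> lep (A + B) D.
Proof.
move=> [c1 [c10 h1]] [c2 [c20 h2]]; exists (c1 + c2); split; first exact: addr_ge0.
have -> : (c1 + c2) *: D - (A + B) = (c1 *: D - A) + (c2 *: D - B).
  by rewrite scalerDl opprD addrACA.
exact: psd_add.
Qed.
Lemma lep0 A : psdmx A -> lep 0 A.
Proof. by move=> hA; exists 0; split; [exact: lexx | rewrite scale0r subrr; exact: psd_0]. Qed.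
Lemma lep_sum (I : Type) (r : seq I) (G : I -> 'M[C]_d) D :
  psdmx D -> (forall i, lep (G i) D) -> lep (\sum_(i <- r) G i) D.
Proof.
move=> hD h; elim: r => [|i r IH]; first by rewrite big_nil; apply: lep0.
by rewrite big_cons; apply: lep_add.
Qed.

Lemma psd_eq0 A : psdmx A -> psdmx (- A) -> A = 0.
Proof.
move=> hA hN; apply/matrixP => i j; rewrite -mul_ev psd0 ?mxE //.
have /psdP/(_ (ev j)) := hA; have /psdP/(_ (ev j)) := hN.
rewrite /qf bfNA oppr_ge0 => h1 h2; apply/eqP; rewrite eq_le h1 h2 //.
Qed.

Lemma lep_0 A : psdmx A -> lep A 0 -> A = 0.
Proof. by move=> hA [c [_ h]]; apply: psd_eq0 => //; move: h; rewrite scaler0 sub0r. Qed.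

Lemma lep_ker A B : psdmx A -> lep A B -> forall x : 'cV_d, B *m x = 0 -> A *m x = 0.
Proof.
move=> hA [c [c0 h]] x hx; apply: psd0 => //.
have /psdP/(_ x) := h; have /psdP/(_ x) := hA.
rewrite /qf bfDA bfNA bfZA {2}/bf -mulmxA hx mulmx0 mxE mulr0 sub0r oppr_ge0 => h1 h2.
by apply/eqP; rewrite eq_le h1 h2.
Qed.

Lemma ker_sub A B : (forall x : 'cV_d, B *m x = 0 -> A *m x = 0) -> (A <= B)%MS.
Proof.
move=> h; rewrite submxE; apply/eqP/matrixP => i j.
have e : B *m (cokermx B *m ev j) = 0 by rewrite mulmxA mulmx_coker mul0mx.
by rewrite -mul_ev -mulmxA h // !mxE.
Qed.

Lemma sub_ker A B : (A <= B)%MS -> forall x : 'cV_d, B *m x = 0 -> A *m x = 0.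
Proof. by move=> /submxP [D ->] x hx; rewrite -mulmxA hx mulmx0. Qed.

Lemma lep_rank A B : psdmx A -> lep A B -> (\rank A <= \rank B)%N.
Proof. by move=> hA h; apply/mxrankS/ker_sub/lep_ker. Qed.

Lemma lep_rank_eq A B : psdmx A -> psdmx B -> lep A B -> (\rank B <= \rank A)%N -> lep B A.
Proof.
move=> hA hB h hr; have sAB := ker_sub (lep_ker hA h).
have := mxrank_leqif_sup sAB => /leqifP; case: ifP => [sBA _|_ hlt].
  have [c [c0 hc]] := Dom hB hA (sub_ker sBA); by exists c.
by move: hr; rewrite leqNgt hlt.
Qed.
End LA.

Section Prog.
Variable C : numClosedFieldType.
Variables d m : nat.
Variable E : 'I_m -> {linear 'M[C]_d -> 'M[C]_d}.
Variable M1 : 'M[C]_d.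
Hypothesis hpos : forall k (A : 'M[C]_d), psdmx A -> psdmx (E k A).

Local Notation EF := (fun k => E k).
Local Notation F := (Fk EF M1).
Local Notation Fs := (Fstr EF M1).

Lemma F_lin k a X Y : F k (a *: X + Y) = a *: F k X + F k Y.
Proof.
by rewrite /Fk mulmxDr mulmxDl -scalemxAr -scalemxAl linearP.
Qed.

Lemma Fs_cons k f X : Fs (k :: f) X = Fs f (F k X).
Proof. by []. Qed.
Lemma Fs_cat f g X : Fs (f ++ g) X = Fs g (Fs f X).
Proof. by rewrite /Fstr foldl_cat. Qed.
Lemma Fs_rcons f k X : Fs (rcons f k) X = F k (Fs f X).
Proof. by rewrite /Fstr foldl_rcons. Qed.

Lemma Fs_lin f a X Y : Fs f (a *: X + Y) = a *: Fs f X + Fs f Y.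
Proof. by elim: f X Y => [//|k f IH] X Y; rewrite !Fs_cons F_lin IH. Qed.

Lemma Fs0 f : Fs f 0 = 0.
Proof.
have h := Fs_lin f 1 0 0; rewrite !scale1r addr0 in h.
by apply: (addrI (Fs f 0)); rewrite addr0 -h.
Qed.

Lemma FsB f c X Y : Fs f (c *: X - Y) = c *: Fs f X - Fs f Y.
Proof.
have -> : c *: X - Y = c *: X + ((-1) *: Y + 0) by rewrite scaleN1r addr0.
by rewrite Fs_lin Fs_lin Fs0 addr0 scaleN1r.
Qed.

Lemma FsD f X Y : Fs f (X + Y) = Fs f X + Fs f Y.
Proof. by rewrite -[X in X + _]scale1r Fs_lin scale1r. Qed.

Lemma F_psd k X : psdmx X -> psdmx (F k X).
Proof.
move=> h; apply: hpos; have -> : adjmx M1 = M1 ^t* by rewrite /adjmx map_trmx.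
exact: psd_cong.
Qed.

Lemma Fs_psd f X : psdmx X -> psdmx (Fs f X).
Proof. by elim: f X => [//|k f IH] X hX; rewrite Fs_cons; apply/IH/F_psd. Qed.

Lemma Fs_lep f X Y : psdmx X -> lep X Y -> lep (Fs f X) (Fs f Y).
Proof.
move=> hX [c [c0 h]]; exists c; split => //; rewrite -FsB; exact: Fs_psd.
Qed.

Definition nonterm X (s : nat -> 'I_m) := forall n, Fs (prefix s n) X != 0.
Definition shift (s : nat -> 'I_m) j := fun i => s (j + i)%N.
Definition pcons k (s : nat -> 'I_m) := fun i => if i is i'.+1 then s i' else k.

Lemma prefix_add s j n : prefix s (j + n) = prefix s j ++ prefix (shift s j) n.
Proof.
rewrite /prefix iotaD map_cat add0n; congr (_ ++ _).
by rewrite -[j in iota j]addn0 iotaDl -map_comp.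
Qed.

Lemma nonterm_shift X s j : nonterm X s -> nonterm (Fs (prefix s j) X) (shift s j).
Proof. by move=> h n; rewrite -Fs_cat -prefix_add; exact: h. Qed.

Lemma nonterm_nz X s : nonterm X s -> X != 0.
Proof. by move=> h; exact: (h 0%N). Qed.

Lemma nonterm_pcons k X s : nonterm (F k X) s -> nonterm X (pcons k s).
Proof.
move=> h [|n].
  apply: contra (h 0%N) => /eqP X0; apply/eqP.
  have X0' : X = 0 := X0.
  by rewrite X0' /= -[F k 0]/(Fs [:: k] 0) Fs0.
have -> : prefix (pcons k s) n.+1 = k :: prefix s n by rewrite -add1n prefix_add.
by rewrite Fs_cons; exact: h.
Qed.

Lemma nonterm_lep X Y s : psdmx X -> lep X Y -> nonterm X s -> nonterm Y s.
Proof.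
move=> hX hl h n; apply: contra (h n) => /eqP e; apply/eqP; apply: lep_0.
  exact: Fs_psd.
by rewrite -e; exact: Fs_lep.
Qed.

Lemma zero_later X s n1 n : (n1 <= n)%N -> Fs (prefix s n1) X = 0 -> Fs (prefix s n) X = 0.
Proof. by move=> le e; rewrite -(subnKC le) prefix_add Fs_cat e Fs0. Qed.

Lemma not_nonterm X s : ~ nonterm X s -> exists n, Fs (prefix s n) X = 0.
Proof.
move=> hn; apply: NNPP => hh; apply: hn => n; apply/eqP => e; apply: hh; by exists n.
Qed.

Lemma nonterm_add X Y s : nonterm (X + Y) s -> nonterm X s \/ nonterm Y s.
Proof.
move=> h; apply: NNPP => hn.
have [n1 e1] : exists n, Fs (prefix s n) X = 0 by apply: not_nonterm => hx; apply: hn; left.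
have [n2 e2] : exists n, Fs (prefix s n) Y = 0 by apply: not_nonterm => hy; apply: hn; right.
have := h (maxn n1 n2); rewrite FsD (zero_later _ e1) ?leq_maxl // (zero_later _ e2) ?leq_maxr //.
by rewrite addr0 eqxx.
Qed.

Lemma nonterm_sum (I : Type) (r : seq I) (G : I -> 'M[C]_d) s :
  nonterm (\sum_(i <- r) G i) s -> exists i, nonterm (G i) s.
Proof.
elim: r => [|i r IH]; first by rewrite big_nil => h; have := h 0%N; rewrite /= eqxx.
rewrite big_cons => /nonterm_add [h|/IH //]; by exists i.
Qed.

Lemma fair_shift s j : fair s -> fair (shift s j).
Proof.
move=> h k N; have [n [Nn e]] := h k (j + N)%N; exists (n - j)%N; split.
  by rewrite leq_subRL // (leq_trans (leq_addr N j) Nn).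
by rewrite /shift subnKC // (leq_trans (leq_addr N j) Nn).
Qed.

Section Gap.
Variable Y : 'M[C]_d.
Hypothesis hY : psdmx Y.

Definition S j := iter j (fun X => X + \sum_(k < m) F k X) Y.

Lemma S_psd j : psdmx (S j).
Proof.
elim: j => [//|j IH] /=; apply: psd_add => //.
by apply: psd_sum => k; apply: F_psd.
Qed.

Lemma G1 j t : nonterm (S j) t -> exists w, (size w <= j)%N /\ nonterm (Fs w Y) t.
Proof.
elim: j t => [|j IH] t /=; first by move=> h; exists [::].
case/nonterm_add => [/IH [w [hw h]]|/nonterm_sum [k /nonterm_pcons /IH [w [hw h]]]].
  by exists w; split => //; apply: leqW.
exists (rcons w k); split; first by rewrite size_rcons.
move=> n; rewrite Fs_rcons.
have := h n.+1; have -> : prefix (pcons k t) n.+1 = k :: prefix t n by rewrite -add1n prefix_add.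
by rewrite Fs_cons.
Qed.

Lemma lep_summand (X : 'M[C]_d) (G : 'I_m -> 'M[C]_d) k :
  psdmx X -> (forall i, psdmx (G i)) -> lep (G k) (X + \sum_(i < m) G i).
Proof.
move=> hX hG; exists 1; split; first exact: ler01.
rewrite scale1r (bigD1 k) //= addrCA addrC addrK.
by apply: psd_add => //; apply: psd_sum.
Qed.

Lemma G2 tau : lep (Fs tau Y) (S (size tau)).
Proof.
elim/last_ind: tau => [|tau k IH]; first exact: lep_refl.
rewrite Fs_rcons size_rcons /=.
apply: lep_trans (lep_summand k (S_psd _) (fun i => F_psd i (S_psd _))).
exact: (Fs_lep [:: k] (Fs_psd tau hY) IH).
Qed.

Lemma lep_S j : lep (S j) (S j.+1).
Proof. by apply: lep_addr; apply: psd_sum => k; apply: F_psd; apply: S_psd. Qed.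

Lemma lep_S_le i j : (i <= j)%N -> lep (S i) (S j).
Proof.
move=> /subnKC <-; elim: (j - i)%N => [|n IH]; first by rewrite addn0; apply: lep_refl.
by rewrite addnS; apply: lep_trans IH (lep_S _).
Qed.

Lemma stab_step i : lep (S i.+1) (S i) -> lep (S i.+2) (S i.+1).
Proof.
move=> h; rewrite [S i.+2]/=.
apply: lep_add; first exact: lep_refl.
apply: lep_sum; first exact: S_psd.
move=> k; apply: lep_trans (lep_summand k (S_psd i) (fun l => F_psd l (S_psd _))).
exact: (Fs_lep [:: k] (S_psd _) h).
Qed.

Lemma stab_all i : lep (S i.+1) (S i) -> forall n, lep (S (i + n)) (S i).
Proof.
move=> h n; have P : forall n, lep (S (i + n).+1) (S (i + n)).
  by elim=> [|n' IH]; rewrite ?addn0 // addnS; apply: stab_step.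
elim: n => [|n IH]; first by rewrite addn0; apply: lep_refl.
by rewrite addnS; apply: lep_trans (P n) IH.
Qed.

Lemma G3 : Y != 0 -> forall j, lep (S j) (S d.-1).
Proof.
move=> Y0.
have [i [id Pi]] : exists i, (i < d)%N /\ lep (S i.+1) (S i).
  apply: NNPP => hn.
  have hr : forall j, (j <= d)%N -> (j < \rank (S j))%N.
    elim=> [_|j IH jd] /=; first by rewrite lt0n mxrank_eq0.
    apply: (leq_ltn_trans (IH (ltnW jd))).
    have hP : ~ lep (S j.+1) (S j) by move=> hh; apply: hn; exists j.
    rewrite ltnNge; apply/negP => hle; apply: hP.
    by apply: lep_rank_eq; [exact: S_psd|exact: S_psd|exact: lep_S|].
  by have := hr d (leqnn d); rewrite ltnNge rank_leq_row.
move=> j; case: (leqP j d.-1) => [jd|dj]; first exact: lep_S_le.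
have id' : (i <= d.-1)%N by rewrite -ltnS prednK // (leq_ltn_trans _ id).
have ij : (i <= j)%N by apply: leq_trans id' (ltnW dj).
have h1 : lep (S j) (S i) by have := stab_all Pi (j - i); rewrite subnKC.
exact: lep_trans h1 (lep_S_le id').
Qed.

Lemma gap tau t : (0 < d)%N -> nonterm (Fs tau Y) t ->
  exists w, (size w < d)%N /\ nonterm (Fs w Y) t.
Proof.
move=> hd h.
have Y0 : Y != 0 by apply: contra (nonterm_nz h) => /eqP ->; rewrite Fs0.
have := nonterm_lep (Fs_psd tau hY) (lep_trans (G2 tau) (G3 Y0 _)) h.
move=> /G1 [w [hw h']]; exists w; split => //.
by rewrite (leq_ltn_trans hw) // prednK.
Qed.
End Gap.

Lemma full_perm (D : seq 'I_m) : uniq D -> size D = m -> perm_eq D (enum 'I_m).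
Proof.
move=> uD sD; apply: uniq_perm => //; first exact: enum_uniq.
move=> k; rewrite mem_enum; case hk: (k \in D) => //; exfalso.
have hsub : {subset k :: D <= enum 'I_m} by move=> x; rewrite mem_enum.
have u : uniq (k :: D) by rewrite /= hk uD.
by have := uniq_leq_size u hsub; rewrite size_enum_ord /= sD ltnn.
Qed.

Lemma exists_notin (D : seq 'I_m) : (size D < m)%N -> exists k, k \notin D.
Proof.
move=> sD; apply: NNPP => hn.
have hsub : {subset enum 'I_m <= D}.
  by move=> x _; apply: NNPP => hx; apply: hn; exists x; apply/negP.
by have := uniq_leq_size (enum_uniq _) hsub; rewrite size_enum_ord leqNgt sD.
Qed.

Lemma interleave_nil (p : seq 'I_m) sig : p != [::] -> interleave p sig != [::].
Proof. by case: p => [//|x [|y ys]]; case: sig. Qed.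

Lemma block (hd : (0 < d)%N) n : forall (D : seq 'I_m) Y t, uniq D -> t 0%N \notin D ->
  (size D + n.+1)%N = m -> psdmx Y -> fair t -> nonterm Y t ->
  exists p sig t', [/\ perm_eq (D ++ p) (enum 'I_m), size sig = n,
    all (fun s => (size s < d)%N) sig, p != [::] &
    fair t' /\ nonterm (Fs (interleave p sig) Y) t'].
Proof.
elim: n => [|n IH] D Y t uD tD hs hY ft h.
  exists [:: t 0%N], [::], (shift t 1); split => //.
    apply: full_perm; first by rewrite cats1 rcons_uniq tD.
    rewrite size_cat /=; lia.
  split; first exact: fair_shift.
  exact (nonterm_shift 1 h).
have [k hk] : exists k, k \notin D ++ [:: t 0%N].
  by apply: exists_notin; rewrite size_cat /=; lia.
have [j [j1 tj]] := ft k 1%N.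
have h1 := nonterm_shift j h.
rewrite -(subnKC j1) prefix_add Fs_cat in h1.
have [w [hw h2]] := gap (F_psd (t 0%N) hY) hd h1.
have a1 : uniq (D ++ [:: t 0%N]) by rewrite cat_uniq uD /= orbF tD.
have a2 : shift t (1 + (j - 1)) 0%N \notin D ++ [:: t 0%N] by rewrite /shift addn0 subnKC // tj.
have a3 : (size (D ++ [:: t 0%N]) + n.+1)%N = m by rewrite size_cat /=; lia.
have a4 : psdmx (Fs w (F (t 0%N) Y)) by exact/Fs_psd/F_psd.
have a5 : fair (shift t (1 + (j - 1))) by exact: fair_shift.
have [p' [sig' [t' [hp hsig hall hp0 [ft' h3]]]]] := IH _ _ _ a1 a2 a3 a4 a5 h2.
exists (t 0%N :: p'), (w :: sig'), t'; split => //=.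
- by rewrite -cat1s catA.
- by rewrite hsig.
- by rewrite hw.
split => //; case: p' hp hp0 h3 => [//|y ys] _ _ h3.
by rewrite /= Fs_cat.
Qed.

Lemma step (hd : (0 < d)%N) Y t : psdmx Y -> fair t -> nonterm Y t ->
  exists b t', inPi d b /\ b != [::] /\ fair t' /\ nonterm (Fs b Y) t'.
Proof.
move=> hY ft h; have m0 : (0 < m)%N by case: (t 0%N) => x; apply: leq_ltn_trans.
have [p [sig [t' [hp hsig hall hp0 [ft' h']]]]] := block hd (n := m.-1) (D := [::]) isT isT
  (prednK m0) hY ft h.
exists (interleave p sig), t'; split; last by split; [exact: interleave_nil|].
by exists p, sig; split.
Qed.

Lemma build (hd : (0 < d)%N) rho t : psdmx rho -> fair t -> nonterm rho t ->
  exists pi, inPiomega d pi /\ nonterm rho pi.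
Proof.
move=> hr ft h.
pose Inv := fun st : 'M[C]_d * (nat -> 'I_m) => [/\ psdmx st.1, fair st.2 & nonterm st.1 st.2].
have ex : forall st, exists bt : seq 'I_m * (nat -> 'I_m),
    Inv st -> [/\ inPi d bt.1, bt.1 != [::] & Inv (Fs bt.1 st.1, bt.2)].
  move=> st; case: (classic (Inv st)) => [[h1 h2 h3]|hn]; last by exists ([::], st.2).
  have [b [t' [hb [hb0 [ft' h']]]]] := step hd h1 h2 h3.
  exists (b, t') => _; split => //; split => //; exact: Fs_psd.
pose f st := proj1_sig (constructive_indefinite_description _ (ex st)).
have hf : forall st, Inv st -> [/\ inPi d (f st).1, (f st).1 != [::] & Inv (Fs (f st).1 st.1, (f st).2)].
  by move=> st; exact: (proj2_sig (constructive_indefinite_description _ (ex st))).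
pose nxt st := (Fs (f st).1 st.1, (f st).2).
pose stt i := iter i nxt (rho, t).
have Inv_stt : forall i, Inv (stt i).
  by elim => [|i IH]; [split | have [_ _ ] := hf _ IH].
pose B i := (f (stt i)).1.
have hB : forall i, inPi d (B i) /\ B i != [::].
  by move=> i; have [] := hf _ (Inv_stt i).
pose L J := flatten [seq B i | i <- iota 0 J].
have LS : forall J, L J.+1 = L J ++ B J.
  by move=> J; rewrite /L -addn1 iotaD map_cat flatten_cat /= cats0.
have sizeL : forall J, (J <= size (L J))%N.
  elim => [//|J IH]; rewrite LS size_cat -addn1 leq_add //.
  by rewrite lt0n size_eq0; exact (hB J).2.
have Lcat : forall a b, (a <= b)%N -> exists r, L b = L a ++ r.
  move=> a b /subnKC <-; elim: (b - a)%N => [|k [r e]]; first by exists [::]; rewrite addn0 cats0.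
  by exists (r ++ B (a + k)%N); rewrite addnS LS e catA.
pose x0 := t 0%N.
pose pi n := nth x0 (L n.+1) n.
have piL : forall J n, (n < size (L J))%N -> pi n = nth x0 (L J) n.
  move=> J n hn.
  have [r1 e1] := Lcat J (maxn J n.+1) (leq_maxl _ _).
  have [r2 e2] := Lcat n.+1 (maxn J n.+1) (leq_maxr _ _).
  transitivity (nth x0 (L (maxn J n.+1)) n); last by rewrite e1 nth_cat hn.
  by rewrite e2 nth_cat (leq_trans (ltnSn n) (sizeL _)).
have mapnth : forall (s : seq 'I_m) n, (n <= size s)%N ->
    [seq nth x0 s i | i <- iota 0 n] = take n s.
  move=> s n hn; apply: (@eq_from_nth _ x0); first by rewrite size_map size_iota size_takel.
  move=> i; rewrite size_map size_iota => hi.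
  by rewrite (nth_map 0%N) ?size_iota // nth_iota // add0n nth_take.
have FsL : forall J, Fs (L J) rho = (stt J).1.
  by elim => [//|J IH]; rewrite LS Fs_cat IH.
exists pi; split.
  exists (fun i => size (L i)); split; first by [].
  move=> i; split.
    rewrite LS size_cat -[X in (X < _)%N]addn0 ltn_add2l lt0n size_eq0; exact (hB i).2.
  have e : [seq pi j | j <- iota (size (L i)) (size (L i.+1) - size (L i))] = B i.
    rewrite LS size_cat addKn.
    transitivity [seq nth x0 (B i) k | k <- iota 0 (size (B i))]; last first.
      by rewrite mapnth // take_size.
    have -> : iota (size (L i)) (size (B i)) = [seq (size (L i) + k)%N | k <- iota 0 (size (B i))].
      by rewrite -iotaDl addn0.
    rewrite -map_comp.
    apply/eq_in_map => k; rewrite mem_iota add0n => /andP [_ hk] /=.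
    rewrite (piL i.+1) LS ?size_cat ?ltn_add2l // nth_cat ltnNge leq_addr /=.
    by rewrite addKn.
  by rewrite e; exact (hB i).1.
move=> n; apply/negP => /eqP e.
have hn : (n <= size (L n))%N := sizeL n.
have ep : prefix pi n = take n (L n).
  rewrite /Defs.prefix -mapnth //; apply/eq_in_map => k; rewrite mem_iota add0n => /andP [_ hk].
  by apply: piL; apply: leq_trans hk hn.
rewrite ep in e.
have := Inv_stt n; case => _ _ /nonterm_nz.
by rewrite -FsL -(cat_take_drop n (L n)) Fs_cat e Fs0 eqxx.
Qed.
End Prog.

Lemma mem_interleave (T : eqType) (p : seq T) sig x : x \in p -> x \in interleave p sig.
Proof.
elim: p sig => [//|y ys IH] [//|s ss] /=.
case: ys IH => [//|z zs] IH; rewrite !inE => /orP [->//|hx].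
by rewrite mem_cat IH ?orbT.
Qed.

Lemma piomega_fair d m (s : nat -> 'I_m) : inPiomega d s -> fair s.
Proof.
move=> [c [c0 hc]] k N.
have cge : forall i, (i <= c i)%N.
  by elim => [|i IH]; rewrite ?c0 // (leq_ltn_trans IH (hc i).1).
have [p [sig [hp _ _ e]]] := (hc N).2.
have : k \in [seq s j | j <- iota (c N) (c N.+1 - c N)].
  by rewrite e mem_interleave // (perm_mem hp) mem_enum.
case/mapP => j; rewrite mem_iota => /andP [h1 _] ->.
by exists j; split => //; apply: leq_trans (cge N) h1.
Qed.

Lemma sum_pair1 (C : numClosedFieldType) d (G : 'I_1 * 'I_d -> C) :
  \sum_a G a = \sum_i G (ord0, i).
Proof.
rewrite (eq_bigr (fun p => G (p.1, p.2))); last by case.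
by rewrite -(pair_bigA _ (fun u i => G (u, i))) big_ord1.
Qed.

Lemma cp_pos (C : numClosedFieldType) d (E : 'M[C]_d -> 'M[C]_d) :
  completely_positive E -> forall A, psdmx A -> psdmx (E A).
Proof.
move=> h A hA w.
have := h 1%N (fun _ _ => A); move=> /(_ _ (fun a => w a.2)).
rewrite sum_pair1; under eq_bigr do rewrite sum_pair1 /=; apply.
move=> v; rewrite sum_pair1; under eq_bigr do rewrite sum_pair1 /=.
exact: (hA (fun i => v (ord0, i))).
Qed.

Theorem mainTheorem5 (C : numClosedFieldType) (d : nat) (hd : (0 < d)%N)
  (m : nat) (E : 'I_m -> {linear 'M[C]_d -> 'M[C]_d})
  (hE : forall k : 'I_m, superop (E k) /\ trace_preserving (E k))
  (M0 M1 : 'M[C]_d)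
  (hM : adjmx M0 *m M0 + adjmx M1 *m M1 = 1%:M)
  (rho0 : 'M[C]_d) (hrho : density rho0) :
  terminates_in (fun k => E k) M1 rho0 (@fair m) <->
  terminates_in (fun k => E k) M1 rho0 (@inPiomega d m).
Proof.
have hpos : forall k (A : 'M[C]_d), psdmx A -> psdmx (E k A).
  by move=> k; apply: cp_pos; exact: (hE k).1.1.
split.
  by move=> H s hs; apply: H; exact: piomega_fair hs.
move=> H s hs; apply: NNPP => hn.
have hnt : nonterm E M1 rho0 s.
  move=> n; apply/eqP => e; apply: hn; case: n e => [|n] e.
    exists 1%N; split => //.
    have e' : rho0 = 0 := e.
    by rewrite e' -[prefix s 1]/[:: s 0%N] (Fs0 E M1).
  by exists n.+1.
have [pi [hpi hnpi]] := build hpos hd hrho.1 hs hnt.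
have [n [_ e]] := H pi hpi.
by have := hnpi n; rewrite e eqxx.
Qed.
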